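(* The logic $\mathrm{LTL}[\mathsf{F}]$ can be exponentially more succinct than $\mathsf{F}(\mathrm{LTL}[\mathsf{Y},\mathsf{wY},\mathsf{O},\mathsf{H}])$ (over finite traces). That is, there exist finite sets of atomic propositions $AP_n$ and languages $\mathcal{L}_n\subseteq(2^{AP_n})^+$, $n\ge 1$, such that for every $n\ge1$: (i) there is $\phi\in\mathrm{LTL}[\mathsf{F}]$ with $\mathcal{L}(\phi)=\mathcal{L}_n$ and $\mathrm{size}(\phi)$ bounded by a polynomial in $n$; and (ii) every $\psi\in\mathsf{F}(\mathrm{LTL}[\mathsf{Y},\mathsf{wY},\mathsf{O},\mathsf{H}])$ with $\mathcal{L}(\psi)=\mathcal{L}_n$ has $\mathrm{size}(\psi)\in 2^{\Omega(n)}$.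
   Context: Let $AP$ be a finite set of atomic propositions and $\Sigma=2^{AP}$. Formulae (in negation normal form) are generated by $\phi ::= p \mid \neg p \mid \phi\lor\phi\mid\phi\land\phi\mid \mathsf{X}\phi\mid\mathsf{wX}\phi\mid\mathsf{F}\phi\mid\mathsf{G}\phi\mid\mathsf{Y}\phi\mid\mathsf{wY}\phi\mid\mathsf{O}\phi\mid\mathsf{H}\phi$ with $p\in AP$. For a finite non-empty trace $\sigma=w_0\cdots w_m\in\Sigma^+$ ($|\sigma|=m+1$, $\sigma[i]=w_i$) and $0\le i<|\sigma|$: $\sigma,i\models p$ iff $p\in\sigma[i]$; $\sigma,i\models\neg p$ iff $p\notin\sigma[i]$; $\lor,\land$ as usual; $\sigma,i\models\mathsf{X}\phi$ iff $i+1<|\sigma|$ and $\sigma,i+1\models\phi$; $\sigma,i\models\mathsf{wX}\phi$ iff $i+1=|\sigma|$ or $\sigma,i+1\models\phi$; $\sigma,i\models\mathsf{F}\phi$ iff $\sigma,j\models\phi$ for some $i\le j<|\sigma|$; $\sigma,i\models\mathsf{G}\phi$ iff $\sigma,j\models\phi$ for all $i\le j<|\sigma|$; $\sigma,i\models\mathsf{Y}\phi$ iff $i>0$ and $\sigma,i-1\models\phi$; $\sigma,i\models\mathsf{wY}\phi$ iff $i=0$ or $\sigma,i-1\models\phi$; $\sigma,i\models\mathsf{O}\phi$ iff $\sigma,j\models\phi$ for some $0\le j\le i$; $\sigma,i\models\mathsf{H}\phi$ iff $\sigma,j\models\phi$ for all $0\le j\le i$. $\sigma\models\phi$ means $\sigma,0\models\phi$;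 $\mathcal{L}(\phi)=\{\sigma\in\Sigma^+:\sigma\models\phi\}$. Size: literals have size 1, unary temporal operators add 1, $\mathrm{size}(\phi_1\circ\phi_2)=\mathrm{size}(\phi_1)+\mathrm{size}(\phi_2)+1$ for $\circ\in\{\land,\lor\}$. For a set $S$ of temporal operators, $\mathrm{LTL}[S]$ is the set of formulae whose temporal operators lie in $S$, and $\mathsf{F}(\mathrm{LTL}[S])$ is the set of formulae $\mathsf{F}(\alpha)$ with $\alpha\in\mathrm{LTL}[S]$. *)

(* Defs.v *)
From mathcomp Require Import all_boot.
Set Implicit Arguments. Unset Strict Implicit. Unset Printing Implicit Defensive.

(* LTL formulae in negation normal form over atoms of (finite) type A. *)
Inductive form (A : Type) : Type :=
| Atom of A | NAtom of A
| Or of form A & form A | And of form A & form A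
| Xf of form A | WXf of form A | Ff of form A | Gf of form A
| Yf of form A | WYf of form A | Of of form A | Hf of form A.

Arguments Atom {A}. Arguments NAtom {A}. Arguments Or {A}. Arguments And {A}.
Arguments Xf {A}. Arguments WXf {A}. Arguments Ff {A}. Arguments Gf {A}.
Arguments Yf {A}. Arguments WYf {A}. Arguments Of {A}. Arguments Hf {A}.

Section Sem.
Variable A : finType.

(* A trace is a sequence of letters in 2^A; position i is meaningful when i < size s. *)
Fixpoint sat (s : seq {set A}) (phi : form A) (i : nat) : bool :=
  match phi with
  | Atom p => p \in nth set0 s i
  | NAtom p => p \notin nth set0 s i
  | Or f g => sat s f i || sat s g i
  | And f g => sat s f i && sat s g i
  | Xf f => (i.+1 < size s) && sat s f i.+1
  | WXf f => (i.+1 == size s) || sat s f i.+1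
  | Ff f => [exists j : 'I_(size s), (i <= j) && sat s f j]
  | Gf f => [forall j : 'I_(size s), (i <= j) ==> sat s f j]
  | Yf f => (0 < i) && sat s f i.-1
  | WYf f => (i == 0) || sat s f i.-1
  | Of f => [exists j : 'I_i.+1, sat s f j]
  | Hf f => [forall j : 'I_i.+1, sat s f j]
  end.

Definition lang_is (phi : form A) (L : seq {set A} -> Prop) : Prop :=
  forall s : seq {set A}, (0 < size s /\ sat s phi 0) <-> L s.

End Sem.

Fixpoint fsize {A : Type} (phi : form A) : nat :=
  match phi with
  | Atom _ | NAtom _ => 1
  | Or f g | And f g => fsize f + fsize g + 1
  | Xf f | WXf f | Ff f | Gf f | Yf f | WYf f | Of f | Hf f => fsize f + 1
  end.

Fixpoint in_LTL_F {A : Type} (phi : form A) : bool :=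
  match phi with
  | Atom _ | NAtom _ => true
  | Or f g | And f g => in_LTL_F f && in_LTL_F g
  | Ff f => in_LTL_F f
  | _ => false
  end.

Fixpoint in_LTL_past {A : Type} (phi : form A) : bool :=
  match phi with
  | Atom _ | NAtom _ => true
  | Or f g | And f g => in_LTL_past f && in_LTL_past g
  | Yf f | WYf f | Of f | Hf f => in_LTL_past f
  | _ => false
  end.

Definition in_F_past {A : Type} (phi : form A) : bool :=
  match phi with
  | Ff f => in_LTL_past f
  | _ => false
  end.

(* Main.v *)
Require Import Defs.
From mathcomp Require Import all_boot.
From mathcomp Require Import zify.
From Stdlib Require Import Lia.

Fixpoint yd {A : Type} (f : form A) : nat :=
  match f with
  | Or f1 f2 | And f1 f2 => maxn (yd f1) (yd f2)
  | Yf g | WYf g => (yd g).+1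
  | Of g | Hf g => yd g
  | _ => 0
  end.

Fixpoint agree {A : finType} (f : form A) (s : seq {set A}) (a : nat)
   (s' : seq {set A}) (a' : nat) : bool :=
  match f with
  | Or f1 f2 | And f1 f2 => agree f1 s a s' a' && agree f2 s a s' a'
  | Yf g | WYf g => agree g s a s' a'
  | Of g => agree g s a s' a' && (sat s (Of g) (a + yd g) == sat s' (Of g) (a' + yd g))
  | Hf g => agree g s a s' a' && (sat s (Hf g) (a + yd g) == sat s' (Hf g) (a' + yd g))
  | _ => true
  end.

Fixpoint wt {A : finType} (f : form A) (s : seq {set A}) (a : nat) : nat :=
  match f with
  | Or f1 f2 | And f1 f2 => wt f1 s a + wt f2 s a
  | Yf g | WYf g => wt g s a
  | Of g => wt g s a + sat s (Of g) (a + yd g)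
  | Hf g => wt g s a + ~~ sat s (Hf g) (a + yd g)
  | _ => 0
  end.

Lemma satO_S (A : finType) s (g : form A) i :
  sat s (Of g) i.+1 = sat s (Of g) i || sat s g i.+1.
Proof.
rewrite /=; apply/existsP/orP.
- case=> j Hj; have := ltn_ord j; rewrite ltnS leq_eqVlt => /orP [/eqP Ej | Lj].
  + by right; rewrite -Ej.
  + by left; apply/existsP; exists (Ordinal Lj).
- case=> [/existsP [j Hj] | H].
  + by exists (widen_ord (leqnSn _) j).
  + by exists ord_max.
Qed.

Lemma satH_S (A : finType) s (g : form A) i :
  sat s (Hf g) i.+1 = sat s (Hf g) i && sat s g i.+1.
Proof.
rewrite /=; apply/forallP/andP.
- move=> H; split; last exact: (H ord_max).
  by apply/forallP => j; exact: (H (widen_ord (leqnSn _) j)).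
- case=> /forallP H1 H2 j; have := ltn_ord j; rewrite ltnS leq_eqVlt => /orP [/eqP Ej | Lj].
  + by rewrite Ej.
  + exact: (H1 (Ordinal Lj)).
Qed.

Lemma satO_mono (A : finType) s (g : form A) i j :
  i <= j -> sat s (Of g) i -> sat s (Of g) j.
Proof.
move=> le /existsP [k Hk]; apply/existsP.
by exists (widen_ord (leq_ltn_trans le (ltnSn j)) k).
Qed.

Lemma satH_mono (A : finType) s (g : form A) i j :
  i <= j -> sat s (Hf g) j -> sat s (Hf g) i.
Proof.
move=> le /forallP H; apply/forallP => k.
exact: (H (widen_ord (leq_ltn_trans le (ltnSn j)) k)).
Qed.

Lemma transfer (A : finType) (f : form A) : in_LTL_past f -> forall u u' v p,
  agree f (u ++ v) (size u) (u' ++ v) (size u') -> yd f <= p ->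
  sat (u ++ v) f (size u + p) = sat (u' ++ v) f (size u' + p).
Proof.
elim: f => [x|x|f IHf g IHg|f IHf g IHg|f IHf|f IHf|f IHf|f IHf|f IHf|f IHf|f IHf|f IHf] //=
   Hp u u' v p Hag Hyd.
- by rewrite !nth_cat !ltnNge !leq_addr /= !addKn.
- by rewrite !nth_cat !ltnNge !leq_addr /= !addKn.
- move: Hag Hp Hyd => /andP [H1 H2] /andP [P1 P2]; rewrite geq_max => /andP [Y1 Y2].
  by rewrite (IHf P1 u u' v p) ?(IHg P2 u u' v p).
- move: Hag Hp Hyd => /andP [H1 H2] /andP [P1 P2]; rewrite geq_max => /andP [Y1 Y2].
  by rewrite (IHf P1 u u' v p) ?(IHg P2 u u' v p).
- case: p Hyd => // p Hyd; rewrite !addnS /=.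
  by rewrite (IHf Hp u u' v p).
- case: p Hyd => // p Hyd; rewrite !addnS /=.
  by rewrite (IHf Hp u u' v p).
- move: Hag => /andP [H1 /eqP H2].
  have key : forall r, sat (u ++ v) (Of f) (size u + (yd f + r)) =
                       sat (u' ++ v) (Of f) (size u' + (yd f + r)).
    elim=> [|r IHr]; first by rewrite !addn0.
    rewrite !addnS !satO_S IHr -!addnS (IHf Hp u u' v) //.
    by rewrite addnS leqW // leq_addr.
  by move: (key (p - yd f)); rewrite subnKC.
- move: Hag => /andP [H1 /eqP H2].
  have key : forall r, sat (u ++ v) (Hf f) (size u + (yd f + r)) =
                       sat (u' ++ v) (Hf f) (size u' + (yd f + r)).
    elim=> [|r IHr]; first by rewrite !addn0.
    rewrite !addnS !satH_S IHr -!addnS (IHf Hp u u' v) //.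
    by rewrite addnS leqW // leq_addr.
  by move: (key (p - yd f)); rewrite subnKC.
Qed.

Lemma prefix_sat (A : finType) (f : form A) : in_LTL_past f -> forall x w q,
  q < size x -> sat (x ++ w) f q = sat x f q.
Proof.
elim: f => [y|y|f IHf g IHg|f IHf g IHg|f IHf|f IHf|f IHf|f IHf|f IHf|f IHf|f IHf|f IHf] //=
   Hp x w q Hq.
- by rewrite nth_cat Hq.
- by rewrite nth_cat Hq.
- by move: Hp => /andP [P1 P2]; rewrite IHf ?IHg.
- by move: Hp => /andP [P1 P2]; rewrite IHf ?IHg.
- rewrite IHf //; exact: leq_ltn_trans (leq_pred q) Hq.
- rewrite IHf //; exact: leq_ltn_trans (leq_pred q) Hq.
- apply: eq_existsb => j; apply: IHf => //.
  exact: leq_trans (ltn_ord j) Hq.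
- apply: eq_forallb => j; apply: IHf => //.
  exact: leq_trans (ltn_ord j) Hq.
Qed.

Lemma agree_prefix (A : finType) (f : form A) : in_LTL_past f -> forall x w x' w' a a',
  a + yd f < size x -> a' + yd f < size x' ->
  agree f (x ++ w) a (x' ++ w') a' = agree f x a x' a'.
Proof.
elim: f => [y|y|f IHf g IHg|f IHf g IHg|f IHf|f IHf|f IHf|f IHf|f IHf|f IHf|f IHf|f IHf] //=
   Hp x w x' w' a a' H1 H2.
- move: Hp => /andP [P1 P2]; rewrite IHf ?IHg //; lia.
- move: Hp => /andP [P1 P2]; rewrite IHf ?IHg //; lia.
- rewrite IHf //; lia.
- rewrite IHf //; lia.
- rewrite IHf //.
  congr (_ && (_ == _)).
  + exact: (@prefix_sat A (Of f) Hp x w (a + yd f) ltac:(lia)).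
  + exact: (@prefix_sat A (Of f) Hp x' w' (a' + yd f) ltac:(lia)).
- rewrite IHf //.
  congr (_ && (_ == _)).
  + exact: (@prefix_sat A (Hf f) Hp x w (a + yd f) ltac:(lia)).
  + exact: (@prefix_sat A (Hf f) Hp x' w' (a' + yd f) ltac:(lia)).
Qed.

Lemma wt_step (A : finType) (f : form A) s a a' : a <= a' ->
  wt f s a + ~~ agree f s a s a' <= wt f s a'.
Proof.
move=> le.
elim: f => [y|y|f IHf g IHg|f IHf g IHg|f IHf|f IHf|f IHf|f IHf|f IHf|f IHf|f IHf|f IHf] //.
- by move: IHf IHg => /=; case: (agree f s a s a'); case: (agree g s a s a') => /=; lia.
- by move: IHf IHg => /=; case: (agree f s a s a'); case: (agree g s a s a') => /=; lia.
- have mono := @satO_mono A s f (a + yd f) (a' + yd f).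
  change (wt f s a + sat s (Of f) (a + yd f) + ~~ (agree f s a s a' &&
     (sat s (Of f) (a + yd f) == sat s (Of f) (a' + yd f))) <= wt f s a' + sat s (Of f) (a' + yd f)).
  move: IHf mono; rewrite leq_add2r.
  case: (sat s (Of f) (a + yd f)); case: (sat s (Of f) (a' + yd f));
  case: (agree f s a s a') => /= IH mono; try lia; by have := mono le isT.
- have mono := @satH_mono A s f (a + yd f) (a' + yd f).
  change (wt f s a + ~~ sat s (Hf f) (a + yd f) + ~~ (agree f s a s a' &&
     (sat s (Hf f) (a + yd f) == sat s (Hf f) (a' + yd f))) <= wt f s a' + ~~ sat s (Hf f) (a' + yd f)).
  move: IHf mono; rewrite leq_add2r.
  case: (sat s (Hf f) (a + yd f)); case: (sat s (Hf f) (a' + yd f));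
  case: (agree f s a s a') => /= IH mono; try lia; by have := mono le isT.
Qed.

Lemma wt_bound (A : finType) (f : form A) s a : wt f s a < fsize f.
Proof.
elim: f => [y|y|f IHf g IHg|f IHf g IHg|f IHf|f IHf|f IHf|f IHf|f IHf|f IHf|f IHf|f IHf] //=;
 try lia.
Qed.

Lemma yd_bound (A : Type) (f : form A) : yd f < fsize f.
Proof.
elim: f => [y|y|f IHf g IHg|f IHf g IHg|f IHf|f IHf|f IHf|f IHf|f IHf|f IHf|f IHf|f IHf] //=;
 lia.
Qed.

Definition kk (n : nat) := n + n + n.
Definition pA n (i : 'I_n) : 'I_(kk n) := lshift n (lshift n i).
Definition bA n (i : 'I_n) : 'I_(kk n) := lshift n (rshift n i).
Definition cA n (i : 'I_n) : 'I_(kk n) := rshift (n + n) i.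

Lemma pA_inj n : injective (pA n).
Proof. by move=> i j /(congr1 val) /= /val_inj. Qed.
Lemma bA_inj n : injective (bA n).
Proof. move=> i j /(congr1 val) /= E; apply/val_inj; rewrite /=; lia. Qed.
Lemma cA_inj n : injective (cA n).
Proof. move=> i j /(congr1 val) /= E; apply/val_inj; rewrite /=; lia. Qed.
Lemma pA_bA n i j : (pA n i == bA n j) = false.
Proof. apply/negbTE/eqP => /(congr1 val) /=; have := ltn_ord i; lia. Qed.
Lemma pA_cA n i j : (pA n i == cA n j) = false.
Proof. apply/negbTE/eqP => /(congr1 val) /=; have := ltn_ord i; lia. Qed.
Lemma bA_cA n i j : (bA n i == cA n j) = false.
Proof. apply/negbTE/eqP => /(congr1 val) /=; have := ltn_ord i; lia. Qed.

Definition lP n (S : {set 'I_n}) : {set 'I_(kk n)} := pA n @: S.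
Definition mW n (S : {set 'I_n}) : {set 'I_(kk n)} := (cA n @: S) :|: (bA n @: ~: S).

Lemma mem_lP_p n S i : (pA n i \in lP n S) = (i \in S).
Proof. exact: mem_imset (@pA_inj n). Qed.
Lemma mem_lP_b n S i : (bA n i \in lP n S) = false.
Proof. apply/negbTE/imsetP => [[j _ /eqP]]; by rewrite eq_sym pA_bA. Qed.
Lemma mem_lP_c n S i : (cA n i \in lP n S) = false.
Proof. apply/negbTE/imsetP => [[j _ /eqP]]; by rewrite eq_sym pA_cA. Qed.
Lemma mem_mW_p n S i : (pA n i \in mW n S) = false.
Proof.
rewrite in_setU; apply/negbTE/norP; split; apply/imsetP => [[j _ /eqP]];
  by rewrite ?pA_bA ?pA_cA.
Qed.
Lemma mem_mW_c n S i : (cA n i \in mW n S) = (i \in S).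
Proof.
rewrite in_setU mem_imset; last exact: cA_inj.
have -> : (cA n i \in bA n @: ~: S) = false.
  by apply/negbTE/imsetP => [[j _ /eqP]]; rewrite eq_sym bA_cA.
by rewrite orbF.
Qed.
Lemma mem_mW_b n S i : (bA n i \in mW n S) = (i \notin S).
Proof.
rewrite in_setU (mem_imset _ _ (@bA_inj n)) in_setC.
have -> : (bA n i \in cA n @: S) = false.
  by apply/negbTE/imsetP => [[j _ /eqP]]; rewrite bA_cA.
by [].
Qed.

Definition good n (s : seq {set 'I_(kk n)}) (t : nat) : bool :=
  [forall i : 'I_n, if pA n i \in nth set0 s t then has (fun L : {set _} => cA n i \in L) (drop t s)
                    else has (fun L : {set _} => bA n i \in L) (drop t s)].
Definition Lang n (s : seq {set 'I_(kk n)}) : Prop :=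
  0 < size s /\ [exists t : 'I_(size s), good n s t].

Lemma exF_has (A : finType) (s : seq {set A}) x j :
  sat s (Ff (Atom x)) j = has (fun L : {set A} => x \in L) (drop j s).
Proof.
apply/existsP/(has_nthP set0).
- case=> j' /andP [le H]; exists (j' - j).
    by rewrite size_drop; have := ltn_ord j'; lia.
  by rewrite nth_drop subnKC.
- case=> i; rewrite size_drop => lt H.
  have lt' : j + i < size s by lia.
  exists (Ordinal lt'); rewrite /= leq_addr /=.
  by rewrite nth_drop in H.
Qed.

Lemma card_sets n : #|{set 'I_n}| = 2 ^ n.
Proof. by rewrite -cardsT -powersetT card_powerset cardsT card_ord. Qed.

Definition Ss n : seq {set 'I_n} := enum (predC1 (set0 : {set 'I_n})).
Definition Sk n j := nth set0 (Ss n) j.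
Definition pad n P : seq {set 'I_(kk n)} := nseq P set0.
Fixpoint ch n P j : seq {set 'I_(kk n)} :=
  match j with 0 => pad n P | j.+1 => ch n P j ++ lP n (Sk n j) :: pad n P end.
Fixpoint uu n P j : seq {set 'I_(kk n)} :=
  match j with 0 => [::] | j.+1 => uu n P j ++ pad n P ++ [:: lP n (Sk n j)] end.

Lemma ch_uu n P j : ch n P j = uu n P j ++ pad n P.
Proof. by elim: j => //= j ->; rewrite -!catA. Qed.

Lemma size_uu n P j : size (uu n P j.+1) = size (uu n P j) + P + 1.
Proof. by rewrite /= !size_cat size_nseq addnA. Qed.

Lemma size_ch n P j : size (ch n P j) = size (uu n P j) + P.
Proof. by rewrite ch_uu size_cat size_nseq. Qed.

Lemma ch_prefix n P j m : exists r, ch n P (j + m) = ch n P j ++ r.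
Proof.
elim: m => [|m [r IH]]; first by exists [::]; rewrite addn0 cats0.
by exists (r ++ lP n (Sk n (j + m)) :: pad n P); rewrite addnS /= IH catA.
Qed.

Lemma ch_letters n P j L : L \in ch n P j ->
  exists S', L = lP n S' /\ (S' = set0 \/ exists2 i, i < j & S' = Sk n i).
Proof.
elim: j => [|j IH] /=.
  move/nseqP => [-> _]; exists set0; split; last by left.
  by rewrite /lP imset0.
rewrite mem_cat in_cons => /orP [/IH [S' [-> [H|[i Hi E]]]] | /orP [/eqP -> | H]].
- by exists S'; split => //; left.
- by exists S'; split => //; right; exists i => //; apply: ltnW.
- by exists (Sk n j); split => //; right; exists j.
- move/nseqP: H => [-> _]; exists set0; split; last by left.
  by rewrite /lP imset0.
Qed.

Lemma ch_noBC n P j L i : L \in ch n P j -> (bA n i \notin L) && (cA n i \notin L).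
Proof. by case/ch_letters => S' [-> _]; rewrite mem_lP_b mem_lP_c. Qed.

Lemma Sk_nz n j : j < size (Ss n) -> Sk n j != set0.
Proof. by move=> H; have := mem_nth set0 H; rewrite mem_enum. Qed.

Lemma Sk_uniq n i j : i < size (Ss n) -> j < size (Ss n) -> (Sk n i == Sk n j) = (i == j).
Proof. by move=> Hi Hj; rewrite /Sk nth_uniq // enum_uniq. Qed.

Lemma size_Ss n : size (Ss n) = (2 ^ n).-1.
Proof. by rewrite /Ss -cardE cardC1 card_sets. Qed.

Lemma has_noBC n (s : seq {set 'I_(kk n)}) t i :
  (forall L, L \in s -> (bA n i \notin L) && (cA n i \notin L)) ->
  has (fun L : {set _} => bA n i \in L) (drop t s) = false /\
  has (fun L : {set _} => cA n i \in L) (drop t s) = false.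
Proof.
move=> H; split; apply/negbTE/hasP => [[L /mem_drop LI]]; have /andP [H1 H2] := H L LI;
  by apply/negP.
Qed.

Lemma noLang_noBC n (s : seq {set 'I_(kk n)}) : 0 < n ->
  (forall L, L \in s -> forall i, (bA n i \notin L) && (cA n i \notin L)) -> ~ Lang n s.
Proof.
move=> n0 H [_ /existsP [t /forallP Ht]].
have := Ht (Ordinal n0).
have [-> ->] := @has_noBC n s t (Ordinal n0) (fun L LI => H L LI _).
by case: ifP.
Qed.

Lemma Lang_next n P j : 0 < n -> Lang n (ch n P j.+1 ++ [:: mW n (Sk n j)]).
Proof.
move=> n0.
have E : ch n P j.+1 ++ [:: mW n (Sk n j)] =
         ch n P j ++ lP n (Sk n j) :: pad n P ++ [:: mW n (Sk n j)].
  by rewrite /= -catA.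
rewrite E; split; first by rewrite size_cat /= addnS.
have lt : size (ch n P j) < size (ch n P j ++ lP n (Sk n j) :: pad n P ++ [:: mW n (Sk n j)]).
  by rewrite size_cat /= addnS ltnS leq_addr.
apply/existsP; exists (Ordinal lt); apply/forallP => i /=.
rewrite nth_cat ltnn subnn drop_cat ltnn subnn drop0 [nth _ _ 0]/= mem_lP_p.
have mI : mW n (Sk n j) \in lP n (Sk n j) :: pad n P ++ [:: mW n (Sk n j)].
  by rewrite in_cons mem_cat mem_head !orbT.
case Hi: (i \in Sk n j); apply/hasP; exists (mW n (Sk n j)) => //.
- exact: (etrans (mem_mW_c n (Sk n j) i) Hi).
- exact: (etrans (mem_mW_b n (Sk n j) i) (congr1 negb Hi)).
Qed.

Lemma noLang_prev n P j : 0 < n -> j < size (Ss n) ->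
  ~ Lang n (ch n P j ++ [:: mW n (Sk n j)]).
Proof.
move=> n0 jK [_ /existsP [t /forallP Ht]].
have tlt : (t : nat) < size (ch n P j) + 1 := leq_trans (ltn_ord t) (eq_leq (size_cat _ _)).
rewrite addn1 ltnS leq_eqVlt in tlt.
case/orP: tlt => [/eqP Et | Hlt].
- have /set0Pn [i Hi] := (@Sk_nz n j jK).
  have := Ht i; rewrite Et nth_cat ltnn subnn drop_cat ltnn subnn /=.
  by rewrite mem_mW_p mem_mW_b Hi.
- have LI := mem_nth set0 Hlt.
  have [S' [EL HS']] := (@ch_letters n P j _ LI).
  have ES : S' = Sk n j.
    apply/setP => i; have := Ht i.
    rewrite nth_cat Hlt drop_cat Hlt EL mem_lP_p !has_cat.
    have [-> ->] := @has_noBC n (ch n P j) t i (fun L LI => @ch_noBC n P j _ i LI).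
    rewrite /= mem_mW_c mem_mW_b.
    by case: (i \in S'); case: (i \in Sk n j).
  case: HS' => [E0 | [i ij Ei]].
  + by move: ((@Sk_nz n j jK)); rewrite -ES E0 eqxx.
  + move: (@Sk_uniq n _ _ (ltn_trans ij jK) jK); rewrite -Ei ES eqxx => /esym /eqP ij'.
    by rewrite ij' ltnn in ij.
Qed.

Lemma lower n (al : form 'I_(kk n)) : 0 < n -> in_LTL_past al ->
  lang_is (Ff al) (Lang n) -> 2 ^ n <= fsize (Ff al).
Proof.
move=> n0 Hp HL.
set P := fsize al.
set K := size (Ss n).
set T := ch n P K.
pose a j := size (uu n P j).
have ydP : yd al < P := @yd_bound _ al.
have C1 : forall j, j < K -> ~~ agree al T (a j) T (a j.+1).
  move=> j jK; apply/negP => Hag.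
  have [r1 E1] := ch_prefix n P j (K - j); rewrite subnKC in E1; last exact: ltnW.
  have [r2 E2] := ch_prefix n P j.+1 (K - j.+1); rewrite subnKC in E2; last exact: jK.
  have Hag1 : agree al (ch n P j ++ r1) (a j) (ch n P j.+1 ++ r2) (a j.+1) by rewrite -E1 -E2.
  have s1 : a j + yd al < size (ch n P j) by rewrite size_ch ltn_add2l.
  have s2 : a j.+1 + yd al < size (ch n P j.+1) by rewrite size_ch ltn_add2l.
  rewrite (@agree_prefix _ al Hp) // in Hag1.
  set w := [:: mW n (Sk n j)].
  have Hag2 : agree al (ch n P j ++ w) (a j) (ch n P j.+1 ++ w) (a j.+1) by rewrite (@agree_prefix _ al Hp).
  have chw : forall i, ch n P i ++ w = uu n P i ++ (pad n P ++ w).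
    by move=> i; rewrite ch_uu catA.
  rewrite (chw j) (chw j.+1) in Hag2.
  have tr := fun p => @transfer _ al Hp (uu n P j) (uu n P j.+1) (pad n P ++ w) p Hag2.
  have [_ /existsP [t Ht]] := proj2 (HL _) (@Lang_next n P j n0).
  move: (ltn_ord t) Ht; move: (t : nat) => t' tlt /andP [_ Ht]; clear t.
  have {}Ht : sat (ch n P j.+1 ++ w) al t' := Ht.
  case: (ltnP t' (size (ch n P j.+1))) => Ht2.
  - rewrite (@prefix_sat _ al Hp) // in Ht.
    apply: (@noLang_noBC n (ch n P j.+1) n0 (fun L LI i => @ch_noBC n P j.+1 L i LI)).
    apply: (proj1 (HL _)); split; first by apply: leq_ltn_trans Ht2.
    by apply/existsP; exists (Ordinal Ht2).
  - apply: (@noLang_prev n P j n0 jK).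
    apply: (proj1 (HL _)); split; first by rewrite size_cat addn1.
    have sz1 : size (ch n P j.+1) = a j.+1 + P by rewrite size_ch.
    have sz2 : size (ch n P j.+1 ++ w) = a j.+1 + P + 1 by rewrite size_cat sz1.
    have sz3 : size (ch n P j ++ w) = a j + P + 1 by rewrite size_cat size_ch.
    have Ep : t' = a j.+1 + (t' - a j.+1) by lia.
    rewrite chw Ep -tr in Ht; last by apply: leq_trans (ltnW ydP) _; lia.
    have tlt' : t' < a j.+1 + P + 1 by rewrite -sz2.
    have lt' : a j + (t' - a j.+1) < size (ch n P j ++ w) by rewrite sz3; lia.
    apply/existsP; exists (Ordinal lt'); rewrite /= chw; exact: Ht.
have C2 : forall j, j <= K -> wt al T (a 0) + j <= wt al T (a j).
  elim=> [|j IH] jK; first by rewrite addn0.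
  have le : a j <= a j.+1 by rewrite /a size_uu -addnA leq_addr.
  have := @wt_step _ al T _ _ le; rewrite (C1 j jK) addn1.
  have := IH (ltnW jK); lia.
have := C2 K (leqnn K); have := @wt_bound _ al T (a K).
rewrite /K size_Ss /=; lia.
Qed.

Definition Gi n (i : 'I_n) : form 'I_(kk n) :=
  And (Or (Atom (pA n i)) (Ff (Atom (bA n i)))) (Or (NAtom (pA n i)) (Ff (Atom (cA n i)))).
Definition body n (i0 : 'I_n) (l : seq 'I_n) : form 'I_(kk n) :=
  foldr (fun i acc => And (Gi n i) acc) (Gi n i0) l.

Lemma body_F n i0 l : in_LTL_F (@body n i0 l).
Proof. by elim: l => //= i l ->. Qed.

Lemma body_size n i0 l : fsize (@body n i0 l) = 10 * size l + 9.
Proof. elim: l => //= i l ->; lia. Qed.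

Lemma satGi n (s : seq {set 'I_(kk n)}) (i : 'I_n) t :
  sat s (Gi n i) t = if pA n i \in nth set0 s t
                   then has (fun L : {set _} => cA n i \in L) (drop t s)
                   else has (fun L : {set _} => bA n i \in L) (drop t s).
Proof.
have -> : sat s (Gi n i) t = ((pA n i \in nth set0 s t) || sat s (Ff (Atom (bA n i))) t) &&
     (~~ (pA n i \in nth set0 s t) || sat s (Ff (Atom (cA n i))) t) by [].
by rewrite !exF_has; case: (pA n i \in nth set0 s t); rewrite ?andbT.
Qed.

Lemma sat_body n i0 l (s : seq {set 'I_(kk n)}) t :
  sat s (@body n i0 l) t = all (fun i => sat s (Gi n i) t) l && sat s (Gi n i0) t.
Proof. by elim: l => //= i l ->; rewrite andbA. Qed.

Lemma sat_body_good n i0 (s : seq {set 'I_(kk n)}) t :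
  sat s (@body n i0 (enum 'I_n)) t = good n s t.
Proof.
rewrite sat_body; apply/idP/idP.
- move=> /andP [/allP H _]; apply/forallP => i; rewrite -satGi; apply: H.
  by rewrite mem_enum.
- move=> /forallP H; apply/andP; split; last by rewrite satGi; apply: H.
  by apply/allP => i _; rewrite satGi; apply: H.
Qed.

Theorem theorem2 :
  exists (k : nat -> nat) (L : forall n : nat, seq {set 'I_(k n)} -> Prop),
    (exists c d : nat, forall n : nat, 1 <= n ->
       exists phi : form 'I_(k n),
         in_LTL_F phi /\ lang_is phi (L n) /\ fsize phi <= c * n ^ d + c)
    /\
    (exists p q N : nat, 0 < p /\ 0 < q /\
       forall n : nat, N <= n -> 1 <= n ->
         forall psi : form 'I_(k n),
           in_F_past psi -> lang_is psi (L n) -> 2 ^ (p * n) <= fsize psi ^ q).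
Proof.
exists kk, Lang; split.
- exists 10, 1 => n n1.
  exists (Ff (@body n (Ordinal n1) (enum 'I_n))); split; first exact: body_F.
  split.
  + move=> s; split.
    * case=> s0 /existsP [j /andP [_ H]]; split => //; apply/existsP; exists j.
      by rewrite -(@sat_body_good n (Ordinal n1)).
    * case=> s0 /existsP [j H]; split => //; apply/existsP; exists j.
      rewrite leq0n andTb; exact: (etrans (@sat_body_good n (Ordinal n1) s j) H).
  + rewrite /= body_size size_enum_ord expn1; lia.
- exists 1, 1, 0; split => //; split => // n _ n1 psi.
  case: psi => // al Hp HL.
  rewrite mul1n expn1; exact: lower.
Qed.
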